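(* A Lie algebra $L$ is $2$-capable if and only if $Z^{*}_2(L)=0$.
   Context: All Lie algebras are over a fixed field. A Lie algebra $L$ is $2$-capable if $L\cong H/Z_2(H)$ for some Lie algebra $H$, where $Z_2(H)$ denotes the second term of the upper central series of $H$. For $L$ with free presentation $L\cong F/R$ ($F$ free Lie algebra, $R$ an ideal), let $\pi:F/[[R,F],F]\to F/R$ be the natural epimorphism; then $Z^{*}_2(L)=\pi\big(Z_2(F/[[R,F],F])\big)$ (this is independent of the presentation). *)

(* Defs.v *)
From HB Require Import structures.
From mathcomp Require Import all_boot all_algebra.
Set Implicit Arguments.
Unset Strict Implicit.
Unset Printing Implicit Defensive.
Import GRing.Theory.
Local Open Scope ring_scope.

Record lieAlgebra (K : fieldType) := LieAlgebra {
  lie_carrier :> lmodType K;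
  lie_br : lie_carrier -> lie_carrier -> lie_carrier;
  lie_br_linl : forall (a : K) (x y z : lie_carrier),
      lie_br (a *: x + y) z = a *: lie_br x z + lie_br y z;
  lie_br_linr : forall (a : K) (x y z : lie_carrier),
      lie_br z (a *: x + y) = a *: lie_br z x + lie_br z y;
  lie_br_alt : forall x : lie_carrier, lie_br x x = 0;
  lie_jacobi : forall x y z : lie_carrier,
      lie_br x (lie_br y z) + lie_br y (lie_br z x) + lie_br z (lie_br x y) = 0
}.
Arguments lie_br {K l}.

Definition lie_hom (K : fieldType) (L M : lieAlgebra K) (f : L -> M) : Prop :=
  (forall (a : K) (x y : L), f (a *: x + y) = a *: f x + f y) /\
  (forall x y : L, f (lie_br x y) = lie_br (f x) (f y)).

Definition surj (A B : Type) (f : A -> B) : Prop := forall y, exists x, f x = y.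

Definition span (K : fieldType) (V : lmodType K) (S : V -> Prop) : V -> Prop :=
  fun v => exists (n : nat) (c : 'I_n -> K) (s : 'I_n -> V),
    (forall i, S (s i)) /\ v = \sum_(i < n) c i *: s i.

Definition br_sub (K : fieldType) (L : lieAlgebra K) (A B : L -> Prop) : L -> Prop :=
  span (fun v : L => exists a b, A a /\ B b /\ v = lie_br a b).

Definition full (T : Type) : T -> Prop := fun _ => True.

Fixpoint ucs (K : fieldType) (H : lieAlgebra K) (n : nat) {struct n} : H -> Prop :=
  match n with
  | 0 => fun x => x = 0
  | n'.+1 => fun x => forall y : H, @ucs K H n' (lie_br x y)
  end.

Definition is_free_on (K : fieldType) (X : Type) (F : lieAlgebra K) (i : X -> F) : Prop :=
  forall (M : lieAlgebra K) (g : X -> M),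
    (exists h : F -> M, lie_hom h /\ forall x, h (i x) = g x) /\
    (forall h1 h2 : F -> M, lie_hom h1 -> lie_hom h2 ->
       (forall x, h1 (i x) = g x) -> (forall x, h2 (i x) = g x) ->
       forall y, h1 y = h2 y).

(* L is 2-capable: L is isomorphic to H / Z_2(H) for some Lie algebra H,
   i.e. there is a surjective Lie homomorphism H -> L with kernel Z_2(H). *)
Definition two_capable (K : fieldType) (L : lieAlgebra K) : Prop :=
  exists (H : lieAlgebra K) (f : H -> L),
    lie_hom f /\ surj f /\ (forall x : H, f x = 0 <-> @ucs K H 2 x).

(* Main.v *)
Require Import Defs.
From HB Require Import structures.
From mathcomp Require Import all_boot all_algebra.
From Stdlib Require Import ClassicalEpsilon.
Set Implicit Arguments.
Unset Strict Implicit.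
Unset Printing Implicit Defensive.
Import GRing.Theory.
Local Open Scope ring_scope.

Section LieLemmas.
Variables (K : fieldType) (L : lieAlgebra K).
Implicit Types x y z : L.

Lemma br0l z : lie_br (0 : L) z = 0.
Proof.
have := lie_br_linl 1 (0 : L) 0 z; rewrite scale1r addr0 scale1r => H.
by apply/esym/(addrI (lie_br (0:L) z)); rewrite addr0 -H.
Qed.
Lemma br0r z : lie_br z (0 : L) = 0.
Proof.
have := lie_br_linr 1 (0 : L) 0 z; rewrite scale1r addr0 scale1r => H.
by apply/esym/(addrI (lie_br z (0:L))); rewrite addr0 -H.
Qed.
Lemma brDl x y z : lie_br (x + y) z = lie_br x z + lie_br y z.
Proof. by have := lie_br_linl 1 x y z; rewrite !scale1r. Qed.
Lemma brDr x y z : lie_br z (x + y) = lie_br z x + lie_br z y.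
Proof. by have := lie_br_linr 1 x y z; rewrite !scale1r. Qed.
Lemma brZl (a : K) x z : lie_br (a *: x) z = a *: lie_br x z.
Proof. by have := lie_br_linl a x 0 z; rewrite addr0 br0l addr0. Qed.
Lemma brNl x z : lie_br (- x) z = - lie_br x z.
Proof. by rewrite -scaleN1r brZl scaleN1r. Qed.
Lemma brZr (a : K) x z : lie_br z (a *: x) = a *: lie_br z x.
Proof. by have := lie_br_linr a x 0 z; rewrite addr0 br0r addr0. Qed.
Lemma brNr x z : lie_br z (- x) = - lie_br z x.
Proof. by rewrite -scaleN1r brZr scaleN1r. Qed.
Lemma br_anti x y : lie_br y x = - lie_br x y.
Proof.
have := lie_br_alt (x + y); rewrite brDl !brDr !lie_br_alt add0r addr0.
move=> H; apply/eqP; rewrite -addr_eq0 addrC; apply/eqP; exact: H.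
Qed.

Lemma ucs2_comm (z u v : L) : @ucs K L 2 z -> lie_br z (lie_br u v) = 0.
Proof.
move=> Hz0; have Hz : forall a b, lie_br (lie_br z a) b = 0 := Hz0.
have J := lie_jacobi z u v.
have E1 : lie_br u (lie_br v z) = 0.
  by rewrite (br_anti z v) brNr (br_anti (lie_br z v) u) Hz !oppr0.
have E2 : lie_br v (lie_br z u) = 0.
  by rewrite (br_anti (lie_br z u) v) Hz oppr0.
by move: J; rewrite E1 E2 !addr0.
Qed.
End LieLemmas.

Section HomLemmas.
Variables (K : fieldType) (L M N : lieAlgebra K).

Lemma hom0 (f : L -> M) : lie_hom f -> f 0 = 0.
Proof.
move=> [Hl _]; have := Hl 1 0 0; rewrite scale1r addr0 scale1r => H.
by apply/esym/(addrI (f 0)); rewrite addr0 -H.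
Qed.
Lemma homD (f : L -> M) x y : lie_hom f -> f (x + y) = f x + f y.
Proof. by move=> [Hl _]; have := Hl 1 x y; rewrite !scale1r. Qed.
Lemma homZ (f : L -> M) (a : K) x : lie_hom f -> f (a *: x) = a *: f x.
Proof. by move=> Hf; have := (proj1 Hf) a x 0; rewrite addr0 (hom0 Hf) addr0. Qed.
Lemma homB (f : L -> M) x y : lie_hom f -> f (x - y) = f x - f y.
Proof.
by move=> Hf; rewrite (homD _ _ Hf) -scaleN1r (homZ _ _ Hf) scaleN1r.
Qed.
Lemma hom_comp (f : L -> M) (g : M -> N) :
  lie_hom f -> lie_hom g -> lie_hom (fun x => g (f x)).
Proof.
move=> [Fl Fb] [Gl Gb]; split; first by move=> a x y; rewrite Fl Gl.
by move=> x y; rewrite Fb Gb.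
Qed.
End HomLemmas.

Lemma span_ind (K : fieldType) (V : lmodType K) (S P : V -> Prop) :
  (forall v, S v -> P v) -> P 0 ->
  (forall (a : K) x y, P x -> P y -> P (a *: x + y)) ->
  forall v, Defs.span S v -> P v.
Proof.
move=> HS H0 HC v [n [c [s [Hs ->]]]].
elim: n c s Hs => [|n IH] c s Hs; first by rewrite big_ord0.
rewrite big_ord_recr /= addrC; apply: HC; first exact: HS.
exact: (IH (fun i => c (widen_ord (leqnSn n) i)) (fun i => s (widen_ord (leqnSn n) i))).
Qed.

Theorem proposition3p1 (K : fieldType) (L : lieAlgebra K)
    (X : Type) (F : lieAlgebra K) (i : X -> F) (p : F -> L)
    (Q : lieAlgebra K) (q : F -> Q) (pi : Q -> L) :
  is_free_on i ->
  lie_hom p -> surj p ->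
  lie_hom q -> surj q ->
  (forall x : F, q x = 0 <->
     br_sub (br_sub (fun r : F => p r = 0) (@full F)) (@full F) x) ->
  lie_hom pi -> (forall x : F, pi (q x) = p x) ->
  (two_capable L <-> (forall z : Q, @ucs K Q 2 z -> pi z = 0)).
Proof.
move=> Hfree Hp Hps Hq Hqs Hker Hpi Hpq; split; last first.
  move=> Hz; exists Q, pi; split => //; split.
    by move=> y; have [x <-] := Hps y; exists (q x); exact: Hpq.
  move=> z; split; last exact: Hz.
  have [x <-] := Hqs z; rewrite Hpq => Hx0 a b /=.
  have [a' <-] := Hqs a; have [b' <-] := Hqs b.
  rewrite -!(proj2 Hq); apply/Hker.
  exists 1%N, (fun _ => 1), (fun _ => lie_br (lie_br x a') b'); split; last by rewrite big_ord1 scale1r.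
  move=> _; exists (lie_br x a'), b'; split => //.
  exists 1%N, (fun _ => 1), (fun _ => lie_br x a'); split; last by rewrite big_ord1 scale1r.
  by move=> _; exists x, a'.
move=> [H [f [Hf [Hfs Hfk]]]] z Hz.
pose g := fun x : X => proj1_sig (constructive_indefinite_description _ (Hfs (p (i x)))).
have Hg : forall x, f (g x) = p (i x).
  by move=> x; exact: (proj2_sig (constructive_indefinite_description _ (Hfs (p (i x))))).
have [[beta [Hb Hbi]] _] := Hfree H g.
have [_ Huniq] := Hfree L (fun x => p (i x)).
have Hfb : forall y, f (beta y) = p y.
  apply: (Huniq (fun y => f (beta y)) p (hom_comp Hb Hf) Hp) => x //.
  by rewrite Hbi Hg.
have Hbk : forall y, q y = 0 -> beta y = 0.
  move=> y /Hker; apply: (span_ind (P := fun y => beta y = 0)).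
  - move=> v [u [b [Hu [_ ->]]]]; rewrite (proj2 Hb).
    suff : forall w, lie_br (beta u) w = 0 by move=> ->.
    move: u Hu; apply: (span_ind (P := fun u => forall w, lie_br (beta u) w = 0)).
    + move=> v' [r [a [Hr [_ ->]]]] w; rewrite (proj2 Hb).
      have : @ucs K H 2 (beta r) by apply/Hfk; rewrite Hfb.
      by move=> Hr2; apply: Hr2.
    + by move=> w; rewrite (hom0 Hb) br0l.
    + by move=> a x1 y1 Px Py w; rewrite (proj1 Hb) lie_br_linl Px Py scaler0 addr0.
  - exact: hom0 Hb.
  - by move=> a x1 y1 Px Py; rewrite (proj1 Hb) Px Py scaler0 addr0.
have [x Ex] := Hqs z; subst z; rewrite Hpq -Hfb; apply/Hfk => h1 h2 /=.
have [a Ha] := Hps (f h1); have [b Hb'] := Hps (f h2).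
have Z1 : @ucs K H 2 (h1 - beta a) by apply/Hfk; rewrite (homB _ _ Hf) Hfb Ha subrr.
have Z2 : @ucs K H 2 (h2 - beta b) by apply/Hfk; rewrite (homB _ _ Hf) Hfb Hb' subrr.
have -> : h1 = beta a + (h1 - beta a) by rewrite addrC subrK.
have -> : h2 = beta b + (h2 - beta b) by rewrite addrC subrK.
move: (h1 - beta a) (h2 - beta b) Z1 Z2 => z1 z2 Z1 Z2.
have Z1' : forall u w, lie_br (lie_br z1 u) w = 0 := Z1.
rewrite [lie_br (beta x) _]brDr brDl (br_anti z1) brNl Z1' oppr0 addr0.
rewrite brDr (br_anti z2) (ucs2_comm _ _ Z2) oppr0 addr0.
rewrite -!(proj2 Hb); apply: Hbk; rewrite !(proj2 Hq).
exact: (Hz (q a) (q b)).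
Qed.
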